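(* Let $i\in\{1,2\}$, let $Z$ be a digital image and $\tau:Z\times Z\to Z$ an $\mathrm{NP}_i$-continuous map. Let $X=Z\sqcup\{e\}$ be the disjoint union, where the new point $e$ is adjacent only to itself, and define $\mu:X\times X\to X$ by $\mu(a,b)=\tau(a,b)$ if $a,b\in Z$, $\mu(a,e)=a$, and $\mu(e,b)=b$. Then $\mu$ is $\mathrm{NP}_i$-continuous and $(X,e,\mu)$ is a unital $\mathrm{NP}_i$-digital H-space. Moreover, if some connected component of $Z$ is not $\mathrm{NP}_i$-contractible, then $(X,e,\mu)$ is not H-equivalent to any $\mathrm{NP}_i$-digital topological group.
   Context: A digital image is a finite set with a reflexive symmetric adjacency relation (a finite reflexive graph); continuous maps send adjacent points to adjacent points. On products, $\mathrm{NP}_u$ declares two tuples adjacent iff coordinates are adjacent in at most $u$ positions and equal elsewhere. An $\mathrm{NP}_i$-homotopy from $f$ to $g:X\to Y$ is an $\mathrm{NP}_i$-continuous $H:X\times[0,m]_{\mathbb{Z}}\to Y$ with $H(\cdot,0)=f$, $H(\cdot,m)=g$; write $f\simeq_i g$. $\mathrm{NP}_i$-contractible means $\mathrm{NP}_i$-homotopy equivalent to a single point. $(f,g)(x)=(f(x),g(x))$, $(f\times g)(x,y)=(f(x),g(y))$; $c_e$ is constant at $e$. An $\mathrm{NP}_i$-digital H-space is $(X,e,\mu)$ with $\mu:X\times X\to X$ $\mathrm{NP}_i$-continuous, $\mu\circ(\mathrm{id}_X,c_e)\simeq_i\mathrm{id}_X$, $\mu\circ(c_e,\mathrm{id}_X)\simeq_i\mathrm{id}_X$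 (homotopies need not be pointed); unital if both composites equal $\mathrm{id}_X$. An $\mathrm{NP}_i$-digital topological group is a digital image $G$ with a group structure whose multiplication $G\times G\to G$ is $\mathrm{NP}_i$-continuous and whose inversion $G\to G$ is continuous; it is regarded as an H-space with its identity element and multiplication. Two H-spaces $(X,e_X,\mu_X)$, $(Y,e_Y,\mu_Y)$ are H-equivalent if there are continuous pointed maps $f:(X,e_X)\to(Y,e_Y)$, $g:(Y,e_Y)\to(X,e_X)$ with $f\circ g\simeq_i\mathrm{id}_Y$, $g\circ f\simeq_i\mathrm{id}_X$, $f\circ\mu_X\simeq_i\mu_Y\circ(f\times f)$, $g\circ\mu_Y\simeq_i\mu_X\circ(g\times g)$. *)

(* Defs.v *)
From mathcomp Require Import all_boot.
Unset Printing Implicit Defensive.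

Record dimage := DImage {
  carrier :> finType;
  adj : rel carrier;
  adj_refl : reflexive adj;
  adj_sym : symmetric adj }.
Arguments adj {_}.
Arguments adj_refl {_}.
Arguments adj_sym {_}.
Arguments DImage {carrier adj}.

Definition dcont (X Y : dimage) (f : X -> Y) : Prop :=
  forall x y : X, adj x y -> adj (f x) (f y).
Arguments dcont {X Y}.

Definition np_adj (u : nat) (X Y : dimage) : rel (prod X Y) :=
  fun p q => [&& adj p.1 q.1, adj p.2 q.2 &
                 ((p.1 != q.1) + (p.2 != q.2) <= u)%N].

Lemma np_adj_refl u (X Y : dimage) : reflexive (@np_adj u X Y).
Proof. by move=> [x y]; rewrite /np_adj /= !adj_refl !eqxx. Qed.

Lemma np_adj_sym u (X Y : dimage) : symmetric (@np_adj u X Y).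
Proof.
by move=> [x y] [x' y']; rewrite /np_adj /= (adj_sym x) (adj_sym y)
  (eq_sym x) (eq_sym y).
Qed.

Definition NP (u : nat) (X Y : dimage) : dimage :=
  DImage (np_adj_refl u X Y) (np_adj_sym u X Y).

Definition int_adj (m : nat) : rel 'I_m.+1 :=
  fun a b => (a <= b.+1)%N && (b <= a.+1)%N.

Lemma int_adj_refl m : reflexive (@int_adj m).
Proof. by move=> a; rewrite /int_adj leqnSn. Qed.

Lemma int_adj_sym m : symmetric (@int_adj m).
Proof. by move=> a b; rewrite /int_adj andbC. Qed.

Definition interval (m : nat) : dimage :=
  DImage (int_adj_refl m) (int_adj_sym m).

Definition np_homotopic (i : nat) (X Y : dimage) (f g : X -> Y) : Prop :=
  exists m : nat, exists H : NP i X (interval m) -> Y,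
    [/\ dcont H,
        forall x : X, H (x, ord0) = f x &
        forall x : X, H (x, ord_max) = g x].
Arguments np_homotopic i {X Y}.

Definition point_adj : rel unit := fun _ _ => true.
Lemma point_adj_refl : reflexive point_adj. Proof. by []. Qed.
Lemma point_adj_sym : symmetric point_adj. Proof. by []. Qed.
Definition point : dimage := DImage point_adj_refl point_adj_sym.

Definition np_homotopy_equiv (i : nat) (X Y : dimage) : Prop :=
  exists (f : X -> Y) (g : Y -> X),
    [/\ dcont f, dcont g,
        np_homotopic i (fun y => f (g y)) id &
        np_homotopic i (fun x => g (f x)) id].

Definition np_contractible (i : nat) (X : dimage) : Prop :=
  np_homotopy_equiv i X point.

Definition sub_adj (Z : dimage) (A : {set Z}) : rel {x : Z | x \in A} :=
  fun a b => adj (val a) (val b).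
Lemma sub_adj_refl (Z : dimage) (A : {set Z}) : reflexive (@sub_adj Z A).
Proof. by move=> a; exact: adj_refl. Qed.
Lemma sub_adj_sym (Z : dimage) (A : {set Z}) : symmetric (@sub_adj Z A).
Proof. by move=> a b; exact: adj_sym. Qed.
Definition subimage (Z : dimage) (A : {set Z}) : dimage :=
  DImage (sub_adj_refl Z A) (sub_adj_sym Z A).

Definition component (Z : dimage) (z : Z) : {set Z} :=
  [set y | connect (@adj Z) z y].

Definition is_Hspace (i : nat) (X : dimage) (e : X) (mu : NP i X X -> X) : Prop :=
  [/\ dcont mu,
      np_homotopic i (fun x : X => mu (x, e)) id &
      np_homotopic i (fun x : X => mu (e, x)) id].

Definition is_unital_Hspace (i : nat) (X : dimage) (e : X)
    (mu : NP i X X -> X) : Prop :=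
  [/\ is_Hspace i X e mu,
      forall x : X, mu (x, e) = x &
      forall x : X, mu (e, x) = x].

Definition is_group (G : Type) (one : G) (mul : G -> G -> G) (inv : G -> G)
  : Prop :=
  [/\ forall x y z, mul x (mul y z) = mul (mul x y) z,
      forall x, mul one x = x, forall x, mul x one = x,
      forall x, mul (inv x) x = one & forall x, mul x (inv x) = one].

Definition is_topgroup (i : nat) (G : dimage) (one : G) (mul : G -> G -> G)
    (inv : G -> G) : Prop :=
  [/\ is_group G one mul inv,
      dcont (fun p : NP i G G => mul p.1 p.2) & dcont inv].

Definition H_equivalent (i : nat) (X : dimage) (eX : X) (muX : NP i X X -> X)
    (Y : dimage) (eY : Y) (muY : NP i Y Y -> Y) : Prop :=
  exists (f : X -> Y) (g : Y -> X),
    [/\ dcont f /\ dcont g, f eX = eY /\ g eY = eX,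
        np_homotopic i (fun y => f (g y)) id /\
        np_homotopic i (fun x => g (f x)) id,
        np_homotopic i (fun p : NP i X X => f (muX p))
                       (fun p : NP i X X => muY (f p.1, f p.2)) &
        np_homotopic i (fun p : NP i Y Y => g (muY p))
                       (fun p : NP i Y Y => muX (g p.1, g p.2))].

(* X = Z disjoint-union {e}, with e = None adjacent only to itself *)
Definition adjoin_adj (Z : dimage) : rel (option Z) :=
  fun a b => match a, b with
             | Some x, Some y => adj x y
             | None, None => true
             | _, _ => false end.
Lemma adjoin_adj_refl (Z : dimage) : reflexive (@adjoin_adj Z).
Proof. by case=> //= x; exact: adj_refl. Qed.
Lemma adjoin_adj_sym (Z : dimage) : symmetric (@adjoin_adj Z).
Proof. by case=> [x|] [y|] //=; exact: adj_sym. Qed.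
Definition adjoin_point (Z : dimage) : dimage :=
  DImage (adjoin_adj_refl Z) (adjoin_adj_sym Z).

Definition adjoin_mu (Z : dimage) (tau : Z -> Z -> Z)
    (p : option Z * option Z) : option Z :=
  match p with
  | (Some a, Some b) => Some (tau a b)
  | (a, None) => a
  | (None, b) => b
  end.

(* Main.v *)
Require Import Defs.
From mathcomp Require Import all_boot zify.

Set Implicit Arguments.
Unset Strict Implicit.

Lemma np_transfer i (X : dimage) m1 m2 (x x' : X) (t t' : 'I_m1.+1) (s s' : 'I_m2.+1) :
  @adj (NP i X (interval m1)) (x,t) (x',t') ->
  (s <= s'.+1)%N && (s' <= s.+1)%N ->
  (nat_of_ord t = t' -> nat_of_ord s = s') ->
  @adj (NP i X (interval m2)) (x,s) (x',s').
Proof.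
rewrite /= /np_adj /= => /and3P [ax _ cnt] hs hts.
apply/and3P; split => //.
apply: leq_trans cnt; rewrite leq_add2l.
case E: (s == s') => //.
case E2: (t == t') => //.
move/eqP: E2 => E2; have E3 := hts (congr1 val E2).
by move/eqP: E; case; apply: val_inj.
Qed.

Lemma np_htrans i (X Y : dimage) (f g h : X -> Y) :
  np_homotopic i f g -> np_homotopic i g h -> np_homotopic i f h.
Proof.
move=> [m1 [H1 [c1 H10 H1m]]] [m2 [H2 [c2 H20 H2m]]].
pose H (p : NP i X (interval (m1 + m2))) : Y :=
  if (nat_of_ord p.2 <= m1)%N then H1 (p.1, inord p.2)
  else H2 (p.1, inord (p.2 - m1)).
have HR : forall x (t : 'I_(m1+m2).+1), (m1 <= t)%N ->
    H (x,t) = H2 (x, inord (t - m1)).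
  move=> x t le; rewrite /H /=; case: ifP => // le'.
  have -> : nat_of_ord t = m1 by apply/eqP; rewrite eqn_leq le le'.
  rewrite subnn.
  have -> : (inord m1 : 'I_m1.+1) = ord_max by apply: val_inj; rewrite /= inordK.
  have -> : (inord 0 : 'I_m2.+1) = ord0 by apply: val_inj; rewrite /= inordK.
  by rewrite H1m H20.
exists (m1 + m2), H; split.
- move=> [x t] [x' t'] hadj.
  have [ht ht'] : (t <= t'.+1)%N /\ (t' <= t.+1)%N.
    by move: hadj => /and3P [_ /andP [] ].
  have := ltn_ord t; have := ltn_ord t'.
  case: (leqP t m1) => a; case: (leqP t' m1) => b => lt1 lt2.
  + rewrite /H /= a b; apply: c1; apply: (@np_transfer i X (m1+m2) m1 x x' t t' _ _ hadj);
      rewrite ?inordK; lia.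
  + rewrite (HR x t) ?(HR x' t'); try lia.
    apply: c2; apply: (@np_transfer i X (m1+m2) m2 x x' t t' _ _ hadj); rewrite ?inordK; lia.
  + rewrite (HR x t) ?(HR x' t'); try lia.
    apply: c2; apply: (@np_transfer i X (m1+m2) m2 x x' t t' _ _ hadj); rewrite ?inordK; lia.
  + rewrite (HR x t) ?(HR x' t'); try lia.
    apply: c2; apply: (@np_transfer i X (m1+m2) m2 x x' t t' _ _ hadj); rewrite ?inordK; lia.
- move=> x; rewrite /H /=.
  have -> : (inord 0 : 'I_m1.+1) = ord0 by apply: val_inj; rewrite /= inordK.
  exact: H10.
- move=> x; rewrite HR /= ?leq_addr //.
  have -> : (inord (m1 + m2 - m1) : 'I_m2.+1) = ord_max.
    by apply: val_inj; rewrite /= inordK addKn.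
  exact: H2m.
Qed.

Lemma np_hpost i (X Y W : dimage) (f g : X -> Y) (q : Y -> W) :
  np_homotopic i f g -> dcont q ->
  np_homotopic i (fun x => q (f x)) (fun x => q (g x)).
Proof.
move=> [m [H [c H0 Hm]]] cq; exists m, (fun p => q (H p)); split.
- by move=> p p' h; apply: cq; apply: c.
- by move=> x; rewrite H0.
- by move=> x; rewrite Hm.
Qed.

Lemma np_hpre i (A X Y : dimage) (f g : X -> Y) (p : A -> X) :
  np_homotopic i f g -> dcont p ->
  np_homotopic i (fun x => f (p x)) (fun x => g (p x)).
Proof.
move=> [m [H [c H0 Hm]]] cp; exists m, (fun a : NP i A (interval m) => H (p a.1, a.2)); split.
- move=> [a t] [a' t'] /= /and3P [ha ht cnt]; apply: c; apply/and3P; split => //.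
  + exact: cp.
  + apply: leq_trans cnt; rewrite leq_add2r.
    case E: (a == a'); last by rewrite leq_b1.
    by move/eqP: E => ->; rewrite eqxx.
- by move=> x; rewrite H0.
- by move=> x; rewrite Hm.
Qed.

Lemma np_hext i (X Y : dimage) (f g f' g' : X -> Y) :
  np_homotopic i f g -> f =1 f' -> g =1 g' -> np_homotopic i f' g'.
Proof.
move=> [m [H [c H0 Hm]]] ef eg; exists m, H; split => // x.
- by rewrite H0 ef.
- by rewrite Hm eg.
Qed.

Lemma np_hrefl i (X : dimage) : np_homotopic i (@id X) id.
Proof.
exists 0, (fun p : NP i X (interval 0) => p.1); split => //.
by move=> [a t] [a' t'] /= /and3P [].
Qed.

Lemma dcont_connect (A B : dimage) (h : A -> B) (a b : A) :
  dcont h -> connect adj a b -> connect adj (h a) (h b).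
Proof.
move=> ch /connectP [p pth ->]; elim: p a pth => [|c p IH] a /=.
  by rewrite connect0.
move=> /andP [hac pth]; apply: connect_trans (IH _ pth).
by apply: connect1; apply: ch.
Qed.

Lemma connect_None (Z : dimage) (y : adjoin_point Z) :
  connect adj (None : adjoin_point Z) y -> y = None.
Proof.
move=> /connectP [p pth ->]; elim: p pth => [|c p IH] //=.
by case: c => //= _ pth; apply: IH.
Qed.

Lemma comp_closed {Z : dimage} {z v v' : Z} :
  v \in component Z z -> adj v v' -> v' \in component Z z.
Proof.
by rewrite !inE => hv ha; apply: connect_trans hv (connect1 ha).
Qed.

Lemma comp_self {Z : dimage} (z : Z) : z \in component Z z.
Proof. by rewrite inE connect0. Qed.

Definition proj {Z : dimage} (z : Z) (o : adjoin_point Z) : subimage Z (component Z z) :=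
  match o with
  | Some v => insubd (exist (fun x => x \in component Z z) z
                        (comp_self (Z:=Z) z)) v
  | None => exist _ z (comp_self (Z:=Z) z)
  end.

Lemma proj_cont (Z : dimage) (z : Z) : dcont (proj z).
Proof.
move=> [v|] [v'|] //= h; last exact: adj_refl.
rewrite /sub_adj !val_insubd /=.
case: ifP => hv; case: ifP => hv' //.
- by rewrite (comp_closed hv h) in hv'.
- have h' : adj v' v by rewrite adj_sym.
  by rewrite (comp_closed hv' h') in hv.
- exact: adj_refl.
Qed.

Unset Implicit Arguments.
Set Strict Implicit.

Theorem mainTheorem14 (i : nat) (hi : i = 1 \/ i = 2) (Z : dimage)
    (tau : Z -> Z -> Z)
    (htau : dcont (fun p : NP i Z Z => tau p.1 p.2)) :
  let X := adjoin_point Z in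
  let e : X := None in
  let mu : NP i X X -> X := adjoin_mu Z tau in
  [/\ dcont mu,
      is_unital_Hspace i X e mu &
      (exists z : Z, ~ np_contractible i (subimage Z (component Z z))) ->
      forall (G : dimage) (one : G) (mul : G -> G -> G) (inv : G -> G),
        is_topgroup i G one mul inv ->
        ~ H_equivalent i X e mu G one (fun p : NP i G G => mul p.1 p.2)].
Proof.
move=> X e mu.
have i1 : (1 <= i)%N by case: hi => ->.
have cmu : dcont mu.
  move=> [[a|] [b|]] [[a'|] [b'|]] /= /and3P [ha hb cnt] //=.
  all: try done.
  apply: (htau (a,b) (a',b')); apply/and3P; split => //.
have tr : forall (G : dimage) (mul : G -> G -> G),
    dcont (fun p : NP i G G => mul p.1 p.2) ->
    forall a, dcont (fun b : G => mul a b).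
  move=> G mul cm a b b' h; apply: (cm (a,b) (a,b')).
  rewrite /= /np_adj /= adj_refl h eqxx /=.
  exact: leq_trans (leq_b1 _) i1.
split => //.
- split; [split => // | by case | by case].
  + apply: (@np_hext i X X id id); first exact: np_hrefl.
      by case. by [].
  + apply: (@np_hext i X X id id); first exact: np_hrefl.
      by case. by [].
- move=> [z nc] G one mul inv [[gA g1l g1r gVl gVr] cm ci]
    [f [g [[cf cg] [fe ge] [hfg hgf] _ _]]].
  apply: nc.
  set y := f (Some z).
  pose s := fun w : subimage Z (component Z z) => (Some (val w) : X).
  have cs : dcont s by [].
  pose u := fun w : subimage Z (component Z z) => mul (inv y) (f (s w)).
  have cu : dcont u.
    by move=> ?? h; apply: (tr G mul cm); apply: cf; apply: cs.
  pose q := fun x : G => g (mul y x).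
  have cq : dcont q by move=> ?? h; apply: cg; apply: (tr G mul cm).
  have hu : forall w, g (u w) = None.
    move=> w; pose h := fun v : Z => g (mul (inv y) (f (Some v : X))).
    have ch : dcont h.
      by move=> ?? hh; apply: cg; apply: (tr G mul cm); apply: cf.
    have hz : connect adj z (val w) by have := valP w; rewrite inE.
    have := dcont_connect ch hz.
    by rewrite /h -/y gVl ge => /connect_None.
  have h1 := np_hpost (np_hpre hfg cu) cq.
  have h1' : np_homotopic i (fun _ => g y) (fun w => g (f (s w))).
    apply: np_hext h1 _ _ => w /=.
      by rewrite /q hu fe g1r.
    by rewrite /q /u gA gVr g1l.
  have h2 := np_hpre hgf cs.
  have h3 := np_hpost (np_htrans h1' h2) (proj_cont z).
  exists (fun _ => tt), (fun _ : point => proj z (g y)); split.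
  + by [].
  + by move=> ?? _; exact: adj_refl.
  + by exists 0, (fun _ => tt); split => // -[].
  + apply: np_hext h3 _ _ => // w /=.
    by apply: val_inj; rewrite /= val_insubd (valP w).
Qed.
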